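(* Let $\mathbb O$ be a finite set of consecutive integers containing $0$, and let $\theta=0$. Let $x(0)\in\mathbb O^n$. If neither $\mathcal V_{<0}(x(0))=\{i: x_i(0)<0\}$ nor $\mathcal V_{>0}(x(0))=\{i: x_i(0)>0\}$ contains a non-empty strictly cohesive set, then there exists a finite legal update sequence from $x(0)$ along which the system reaches the consensus state $(0,\dots,0)$.
   Context: Let $n\ge1$, $\mathcal V=\{1,\dots,n\}$, and let $W=(w_{ij})$ be an $n\times n$ row-stochastic matrix (nonnegative entries, each row summing to $1$). For $x\in\mathbb O^n$, $i\in\mathcal V$, $z\in\mathbb O$, define $C^i_{\mathrm{social}}(z;x)=\sum_{j=1}^n w_{ij}|z-x_j|$ and $P_i(x)=\{z\in\mathbb O: C^i_{\mathrm{social}}(z;x)\le C^i_{\mathrm{social}}(x_i;x),\ |z-\theta|\le |x_i-\theta|\}$. A legal update sequence from $x(0)$ is a finite sequence $(i_1,z_1),\dots,(i_T,z_T)$ with $i_t\in\mathcal V$, generating $x(1),\dots,x(T)$ where $x(t)$ is obtained from $x(t-1)$ by setting coordinate $i_t$ to $z_t$, such that $z_t\in P_{i_t}(x(t-1))$ for every $t$. A set $\mathcal M\subseteq\mathcal V$ is strictly cohesive if $\sum_{j\in\mathcal M}w_{ij}>\tfrac12$ for every $i\in\mathcal M$. *)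

(* Defs.v *)
From HB Require Import structures.
From mathcomp Require Import all_boot all_order all_algebra.
Set Implicit Arguments. Unset Strict Implicit. Unset Printing Implicit Defensive.
Import Order.TTheory GRing.Theory Num.Theory.
Local Open Scope ring_scope.

Definition inO (a b : int) (z : int) : bool := (a <= z) && (z <= b).

Definition row_stochastic (R : realFieldType) (n : nat) (W : 'M[R]_n) : Prop :=
  (forall i j, 0 <= W i j) /\ (forall i, \sum_(j < n) W i j = 1).

Definition Csocial (R : realFieldType) (n : nat) (W : 'M[R]_n)
  (i : 'I_n) (z : int) (x : 'I_n -> int) : R :=
  \sum_(j < n) W i j * (`|z - x j|%:~R).

Definition inP (R : realFieldType) (n : nat) (W : 'M[R]_n) (a b theta : int)
  (x : 'I_n -> int) (i : 'I_n) (z : int) : Prop :=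
  inO a b z /\ Csocial W i z x <= Csocial W i (x i) x /\
  `|z - theta| <= `|x i - theta|.

Definition upd (n : nat) (x : 'I_n -> int) (i : 'I_n) (z : int) : 'I_n -> int :=
  fun j => if j == i then z else x j.

Fixpoint legal (R : realFieldType) (n : nat) (W : 'M[R]_n) (a b theta : int)
  (x : 'I_n -> int) (s : seq ('I_n * int)) : Prop :=
  match s with
  | [::] => True
  | (i, z) :: s' => inP W a b theta x i z /\ legal W a b theta (upd x i z) s'
  end.

Fixpoint final (n : nat) (x : 'I_n -> int) (s : seq ('I_n * int)) : 'I_n -> int :=
  match s with
  | [::] => x
  | (i, z) :: s' => final (upd x i z) s'
  end.

Definition strictly_cohesive (R : realFieldType) (n : nat) (W : 'M[R]_n)
  (M : {set 'I_n}) : Prop :=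
  forall i, i \in M -> \sum_(j in M) W i j > 1 / 2.

Definition Vneg (n : nat) (x : 'I_n -> int) : {set 'I_n} := [set i | x i < 0].
Definition Vpos (n : nat) (x : 'I_n -> int) : {set 'I_n} := [set i | x i > 0].

(* Main.v *)
Require Import Defs.
From HB Require Import structures.
From mathcomp Require Import all_boot all_order all_algebra.
From mathcomp Require Import zify.
Import Order.TTheory GRing.Theory Num.Theory.
Set Implicit Arguments. Unset Strict Implicit.
Local Open Scope ring_scope.

Lemma sum_sign (R : realFieldType) (n : nat) (W : 'M[R]_n) i (P : pred 'I_n) :
  row_stochastic W -> \sum_(j | P j) W i j <= 1/2 ->
  \sum_(j < n) W i j * ((if P j then 1 else -1 : int)%:~R) <= 0.
Proof.
move=> [W0 W1] hS.
rewrite (bigID P) /=.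
rewrite (eq_bigr (fun j => W i j)); last by move=> j ->; rewrite mulr1.
rewrite [X in _ + X](eq_bigr (fun j => - W i j)); last first.
  by move=> j Hj; rewrite (negbTE Hj) mulrN1.
rewrite sumrN.
move: (W1 i); rewrite (bigID P) /= => h.
have -> : \sum_(j | ~~ P j) W i j = 1 - \sum_(j | P j) W i j by rewrite -h addrC addrK.
set S := \sum_(j | P j) W i j in hS *.
have : S * 2 <= 1.
  by move: hS; rewrite ler_pdivlMr // mul1r.
move=> h2.
rewrite opprB addrA -mulr2n -mulr_natr subr_le0 //.
Qed.

Lemma cost_neg (R : realFieldType) (n : nat) (W : 'M[R]_n) (x : 'I_n -> int) i :
  row_stochastic W -> x i < 0 -> \sum_(j in Vneg x) W i j <= 1/2 ->
  Csocial W i (x i + 1) x <= Csocial W i (x i) x.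
Proof.
move=> hW xi0 hS; have [W0 _] := hW.
rewrite /Csocial.
apply: (le_trans (y := \sum_(j < n) W i j * ((`|x i - x j| + (if x j < 0 then 1 else -1 : int))%:~R))).
  apply: ler_sum => j _; apply: ler_wpM2l => //; rewrite ler_int.
  case: ifP => H; lia.
under eq_bigr do rewrite intrD mulrDr.
rewrite big_split /= -{2}[\sum_(j < n) W i j * _]addr0 lerD2l.
apply: sum_sign => //.
by rewrite (eq_bigl (fun j => j \in Vneg x)) // => j; rewrite inE.
Qed.

Lemma cost_pos (R : realFieldType) (n : nat) (W : 'M[R]_n) (x : 'I_n -> int) i :
  row_stochastic W -> 0 < x i -> \sum_(j in Vpos x) W i j <= 1/2 ->
  Csocial W i (x i - 1) x <= Csocial W i (x i) x.
Proof.
move=> hW xi0 hS; have [W0 _] := hW.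
rewrite /Csocial.
apply: (le_trans (y := \sum_(j < n) W i j * ((`|x i - x j| + (if 0 < x j then 1 else -1 : int))%:~R))).
  apply: ler_sum => j _; apply: ler_wpM2l => //; rewrite ler_int.
  case: ifP => H; lia.
under eq_bigr do rewrite intrD mulrDr.
rewrite big_split /= -{2}[\sum_(j < n) W i j * _]addr0 lerD2l.
apply: sum_sign => //.
by rewrite (eq_bigl (fun j => j \in Vpos x)) // => j; rewrite inE.
Qed.

Definition noCoh (R : realFieldType) (n : nat) (W : 'M[R]_n) (S : {set 'I_n}) :=
  ~ exists M : {set 'I_n}, M != set0 /\ M \subset S /\ strictly_cohesive W M.

Lemma noCoh_sub (R : realFieldType) (n : nat) (W : 'M[R]_n) (S S' : {set 'I_n}) :
  S' \subset S -> noCoh W S -> noCoh W S'.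
Proof.
move=> sub h [M [M0 [MS Mc]]]; apply: h; exists M; split=> //; split=> //.
exact: subset_trans MS sub.
Qed.

Lemma pick_nc (R : realFieldType) (n : nat) (W : 'M[R]_n) (S : {set 'I_n}) :
  noCoh W S -> S != set0 -> exists2 i, i \in S & \sum_(j in S) W i j <= 1/2.
Proof.
move=> h S0.
case: (pickP (fun i => (i \in S) && (\sum_(j in S) W i j <= 1/2))).
  by move=> i /andP [H1 H2]; exists i.
move=> none; exfalso; apply: h; exists S; split=> //; split=> //.
move=> i iS; move: (none i); rewrite iS /= => /negbT.
by rewrite -ltNge.
Qed.

Definition meas (n : nat) (x : 'I_n -> int) : nat := (\sum_(i < n) absz (x i))%N.

Lemma meas_upd (n : nat) (x : 'I_n -> int) i z :
  (absz z < absz (x i))%N -> (meas (upd x i z) < meas x)%N.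
Proof.
move=> h; rewrite /meas (bigD1 i) //= [X in (_ < X)%N](bigD1 i) //= /upd eqxx.
rewrite (eq_bigr (fun j => absz (x j))); last by move=> j /negbTE ->.
by rewrite ltn_add2r.
Qed.

Lemma step (R : realFieldType) (n : nat) (W : 'M[R]_n) (a b : int) (x : 'I_n -> int) :
  row_stochastic W -> a <= 0 <= b -> (forall i, inO a b (x i)) ->
  noCoh W (Vneg x) -> noCoh W (Vpos x) ->
  ~~ ((Vneg x == set0) && (Vpos x == set0)) ->
  exists i z, inP W a b 0 x i z /\ (meas (upd x i z) < meas x)%N /\
    (forall j, inO a b (upd x i z j)) /\ Vneg (upd x i z) \subset Vneg x /\
    Vpos (upd x i z) \subset Vpos x.
Proof.
move=> hW /andP [a0 b0] hO hN hP.
case: (boolP (Vneg x == set0)) => /= [_|N0] H.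
  have [i iS hs] := pick_nc hP H.
  move: iS; rewrite inE => xi0.
  exists i, (x i - 1); split; [|split; [|split; [|split]]].
  - split; last split.
    + move: (hO i); rewrite /inO; lia.
    + exact: cost_pos.
    + lia.
  - apply: meas_upd; lia.
  - move=> j; rewrite /upd; case: ifP => _ //; move: (hO i); rewrite /inO; lia.
  - apply/subsetP => j; rewrite !inE /upd; case: ifP => [/eqP ->|_] //; lia.
  - apply/subsetP => j; rewrite !inE /upd; case: ifP => [/eqP ->|_] //; lia.
have [i iS hs] := pick_nc hN N0.
move: iS; rewrite inE => xi0.
exists i, (x i + 1); split; [|split; [|split; [|split]]].
- split; last split.
  + move: (hO i); rewrite /inO; lia.
  + exact: cost_neg.
  + lia.
- apply: meas_upd; lia.
- move=> j; rewrite /upd; case: ifP => _ //; move: (hO i); rewrite /inO; lia.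
- apply/subsetP => j; rewrite !inE /upd; case: ifP => [/eqP ->|_] //; lia.
- apply/subsetP => j; rewrite !inE /upd; case: ifP => [/eqP ->|_] //; lia.
Qed.

Lemma allz (n : nat) (x : 'I_n -> int) i : Vneg x = set0 -> Vpos x = set0 -> x i = 0.
Proof.
move=> e1 e2.
have h1 : i \notin Vneg x by rewrite e1 inE.
have h2 : i \notin Vpos x by rewrite e2 inE.
move: h1 h2; rewrite !inE; lia.
Qed.

Lemma main (R : realFieldType) (n : nat) (W : 'M[R]_n) (a b : int) :
  row_stochastic W -> a <= 0 <= b -> forall k (x : 'I_n -> int),
  (meas x <= k)%N -> (forall i, inO a b (x i)) ->
  noCoh W (Vneg x) -> noCoh W (Vpos x) ->
  exists s : seq ('I_n * int), legal W a b 0 x s /\ (forall i, final x s i = 0).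
Proof.
move=> hW hab k; elim: k => [|k IH] x hk hO hN hP;
  (case: (boolP ((Vneg x == set0) && (Vpos x == set0))) => [/andP [/eqP e1 /eqP e2]|H];
  [exists [::]; split=> // i /=; apply: allz; [exact: e1|exact: e2]|]);
  have [i [z [hi [hm [hO' [sN sP]]]]]] := step hW hab hO hN hP H.
  by move: hm hk; lia.
have [s [hs hf]] := IH (upd x i z) ltac:(lia) hO' (noCoh_sub sN hN) (noCoh_sub sP hP).
by exists ((i, z) :: s).
Qed.

Theorem theorem5 (R : realFieldType) (n : nat) (W : 'M[R]_n) (a b : int)
  (x0 : 'I_n -> int) :
  (0 < n)%N ->
  row_stochastic W ->
  a <= 0 <= b ->
  (forall i, inO a b (x0 i)) ->
  ~ (exists M : {set 'I_n}, M != set0 /\ M \subset Vneg x0 /\ strictly_cohesive W M) ->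
  ~ (exists M : {set 'I_n}, M != set0 /\ M \subset Vpos x0 /\ strictly_cohesive W M) ->
  exists s : seq ('I_n * int),
    legal W a b 0 x0 s /\ (forall i, final x0 s i = 0).
Proof.
move=> _ hW hab hO hN hP.
exact: (main hW hab (leqnn (meas x0)) hO hN hP).
Qed.
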